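(* Let $S$ be a string and let $i<j<k$ be positions such that $S[i\mathinner{.\,.}i']$, $S[j\mathinner{.\,.}j']$ and $S[k\mathinner{.\,.}k']$ are runs of $S$ having the same (smallest) period. Then $k>i'$.
   Context: An integer $p>0$ is a period of a string $P$ if $P[t]=P[t+p]$ for all $t\in[0,|P|-p)$; $\mathsf{per}(P)$ is the smallest period of $P$. A fragment $F=S[a\mathinner{.\,.}b]$ of $S$ is a run of $S$ if $\mathsf{per}(F)\leq |F|/2$ and $F$ cannot be extended by one position to the left or to the right within $S$ with its smallest period remaining the same. *)

(* Defs.v *)
From mathcomp Require Import all_boot.
Set Implicit Arguments. Unset Strict Implicit. Unset Printing Implicit Defensive.

Definition is_period (T : eqType) (P : seq T) (p : nat) : Prop :=
  0 < p /\ forall (x0 : T) (t : nat), t + p < size P -> nth x0 P t = nth x0 P (t + p).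

Definition is_per (T : eqType) (P : seq T) (p : nat) : Prop :=
  is_period P p /\ forall q, is_period P q -> p <= q.

(* The fragment S[a..b] (inclusive), meaningful when a <= b < |S|. *)
Definition frag (T : eqType) (S : seq T) (a b : nat) : seq T :=
  take (b.+1 - a) (drop a S).

Definition run_with_per (T : eqType) (S : seq T) (a b p : nat) : Prop :=
  [/\ a <= b < size S,
      is_per (frag S a b) p,
      2 * p <= size (frag S a b),
      (0 < a -> ~ is_per (frag S a.-1 b) p) &
      (b.+1 < size S -> ~ is_per (frag S a b.+1) p)].

(* Main.v *)
Require Import Defs.
From mathcomp Require Import all_boot.
From mathcomp Require Import zify.

Lemma frag_size (T : eqType) (S : seq T) a b :
  b < size S -> size (frag S a b) = b.+1 - a.
Proof. move=> h; rewrite /frag size_takel // size_drop; lia. Qed.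

Lemma frag_nth (T : eqType) (x0 : T) (S : seq T) a b t :
  t < b.+1 - a -> nth x0 (frag S a b) t = nth x0 S (a + t).
Proof. by move=> h; rewrite /frag nth_take // nth_drop. Qed.

Lemma core (T : eqType) (S : seq T) a a' b b' p :
  a < b -> b + p <= a'.+1 -> b + p <= b'.+1 ->
  run_with_per S a a' p -> run_with_per S b b' p -> False.
Proof.
move=> ab h1 h2 [/andP[_ Ha'] [[p0 Pa] _] _ _ _] [/andP[bb' Hb'] [[_ Pb] minb] _ Lb _].
apply: Lb; first lia.
have Hs1 : size (frag S b.-1 b') = b'.+1 - b.-1 by rewrite frag_size.
have Hs2 : size (frag S b b') = b'.+1 - b by rewrite frag_size.
have Hs3 : size (frag S a a') = a'.+1 - a by rewrite frag_size.
split.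
- split => // x0 t; rewrite Hs1 => ht.
  rewrite !frag_nth; try lia.
  case: t ht => [|t] ht.
  + have := Pa x0 (b.-1 - a); rewrite Hs3 !frag_nth; try lia.
    have -> : a + (b.-1 - a) = b.-1 + 0 by lia.
    have -> : a + (b.-1 - a + p) = b.-1 + (0 + p) by lia.
    by apply; lia.
  + have := Pb x0 t; rewrite Hs2 !frag_nth; try lia.
    have -> : b + t = b.-1 + t.+1 by lia.
    have -> : b + (t + p) = b.-1 + (t.+1 + p) by lia.
    by apply; lia.
- move=> q [q0 Pq]; apply: minb; split => // x0 t; rewrite Hs2 => ht.
  have := Pq x0 t.+1; rewrite Hs1 !frag_nth; try lia.
  have -> : b.-1 + t.+1 = b + t by lia.
  have -> : b.-1 + (t.+1 + q) = b + (t + q) by lia.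
  by apply; lia.
Qed.

Theorem lemma2 (T : eqType) (S : seq T) (i i' j j' k k' p : nat) :
  i < j -> j < k ->
  run_with_per S i i' p -> run_with_per S j j' p -> run_with_per S k k' p ->
  k > i'.
Proof.
move=> ij jk Ri Rj Rk; rewrite ltnNge; apply/negP => ki.
have [/andP[_ Hj'] [[p0 _] _] Lj _ _] := Rj.
have [/andP[_ Hk'] _ Lk _ _] := Rk.
rewrite frag_size // in Lj; rewrite frag_size // in Lk.
have h : i' < j + p - 1.
  rewrite ltnNge; apply/negP => h.
  by apply: (@core T S i i' j j' p) => //; lia.
by apply: (@core T S j j' k k' p) => //; lia.
Qed.
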